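(* Let $f\in\mathcal{H}^2_{\omega}$. For an integer $k\geq1$ and $\lambda\in\mathbb{C}$ put $g_{k,\lambda}(z)=z^k+\lambda$. The following are equivalent: (i) $f$ is $\mathcal{H}^2_{\omega}$-inner; (ii) $\|f\|=1$ and for every integer $k\geq 1$ at least one of the following holds: (C1) there is a constant $C_k$ with $\|fg_{k,\lambda}\|^2\leq C_k+|\lambda|^2$ for all $\lambda\in\mathbb{C}$; (C2) there is a constant $D_k$ with $\|fg_{k,\lambda}\|^2\geq D_k+|\lambda|^2$ for all $\lambda\in\mathbb{C}$; (iii) $\|f\|=1$ and $|p(0)|\leq\|pf\|$ for every polynomial $p\in\mathbb{C}[z]$.
   Context: Let $\omega=\{\omega_n\}_{n\geq 0}$ be a sequence of positive reals with $\omega_0=1$ and $\lim_{n\to\infty}\omega_{n+1}/\omega_n=1$. $\mathcal{H}^2_{\omega}$ is the Hilbert space of power series $f(z)=\sum_{n\ge0}a_nz^n$ with $\|f\|^2=\sum_{n\geq0}\omega_n|a_n|^2<\infty$ and inner product $\langle f,g\rangle=\sum_n\omega_na_n\overline{b_n}$ for $g=\sum b_nz^n$; its elements are holomorphic on the unit disk $\mathbb{D}$. A function $f\in\mathcal{H}^2_{\omega}$ is $\mathcal{H}^2_{\omega}$-inner if $\|f\|=1$ and $\langle z^mf,f\rangle=0$ for all integers $m\geq1$. *)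

(* Defs.v *)
From Stdlib Require Import Reals Lra List.
Open Scope R_scope.

Definition Cpx : Type := (R * R)%type.
Definition C0 : Cpx := (0, 0).
Definition C1 : Cpx := (1, 0).
Definition Cadd (z w : Cpx) : Cpx := (fst z + fst w, snd z + snd w).
Definition Cmul (z w : Cpx) : Cpx :=
  (fst z * fst w - snd z * snd w, fst z * snd w + snd z * fst w).
Definition Cconj (z : Cpx) : Cpx := (fst z, - snd z).
Definition Cnorm2 (z : Cpx) : R := fst z ^ 2 + snd z ^ 2.
Definition Cmod (z : Cpx) : R := sqrt (Cnorm2 z).

(* Power series are represented by their coefficient sequences nat -> Cpx. *)

Definition weight (w : nat -> R) : Prop :=
  (forall n, 0 < w n) /\ w 0%nat = 1 /\ Un_cv (fun n => w (S n) / w n) 1.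

Definition norm2_is (w : nat -> R) (a : nat -> Cpx) (l : R) : Prop :=
  infinite_sum (fun n => w n * Cnorm2 (a n)) l.

Definition in_H2 (w : nat -> R) (a : nat -> Cpx) : Prop :=
  exists l, norm2_is w a l.

Definition inner_is (w : nat -> R) (a b : nat -> Cpx) (l : Cpx) : Prop :=
  infinite_sum (fun n => w n * fst (Cmul (a n) (Cconj (b n)))) (fst l) /\
  infinite_sum (fun n => w n * snd (Cmul (a n) (Cconj (b n)))) (snd l).

(* coefficients of z^m f *)
Definition shift (m : nat) (a : nat -> Cpx) (n : nat) : Cpx :=
  if Nat.ltb n m then C0 else a (n - m)%nat.

(* Polynomials as coefficient lists [p_0; p_1; ...; p_d]. *)
Definition cpoly := list Cpx.

Fixpoint polymul (p : cpoly) (a : nat -> Cpx) : nat -> Cpx :=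
  match p with
  | nil => fun _ => C0
  | c :: p' => fun n => Cadd (Cmul c (a n)) (shift 1 (polymul p' a) n)
  end.

Definition peval0 (p : cpoly) : Cpx := hd C0 p.

Definition gkl (k : nat) (lam : Cpx) : cpoly :=
  lam :: (repeat C0 (k - 1) ++ (C1 :: nil)).

Definition is_inner (w : nat -> R) (a : nat -> Cpx) : Prop :=
  norm2_is w a 1 /\
  forall m : nat, (1 <= m)%nat -> inner_is w (shift m a) a C0.

(* Main.v *)
From Coquelicot Require Import Coquelicot.
From Stdlib Require Import Reals List Lra Lia Psatz FunctionalExtensionality.
Require Import Defs.
Open Scope R_scope.

Lemma sum_plus u v lu lv : infinite_sum u lu -> infinite_sum v lv ->
  infinite_sum (fun n => u n + v n) (lu + lv).
Proof.
  intros Hu Hv. apply is_series_Reals in Hu, Hv. apply is_series_Reals.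
  exact (is_series_plus _ _ _ _ Hu Hv).
Qed.

Lemma sum_scal u lu x : infinite_sum u lu -> infinite_sum (fun n => x * u n) (x * lu).
Proof.
  intros Hu. apply is_series_Reals in Hu. apply is_series_Reals.
  exact (is_series_scal x _ _ Hu).
Qed.

Lemma sum_ext u v l : (forall n, u n = v n) -> infinite_sum u l -> infinite_sum v l.
Proof.
  intros H Hu. replace v with u; auto. apply functional_extensionality; auto.
Qed.

Lemma lin4 (u v t r s : nat -> R) lu lv lt lr x y z l :
  infinite_sum u lu -> infinite_sum v lv -> infinite_sum t lt -> infinite_sum r lr ->
  (forall n, s n = x * u n + y * v n + z * t n + r n) ->
  l = x * lu + y * lv + z * lt + lr -> infinite_sum s l.
Proof.
  intros Hu Hv Ht Hr Hs Hl. subst l.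
  apply sum_ext with (u := fun n => x * u n + y * v n + z * t n + r n); [intros; auto|].
  repeat apply sum_plus; auto; apply sum_scal; auto.
Qed.

Lemma sum_zero : infinite_sum (fun _ => 0) 0.
Proof.
  intros eps He. exists 0%nat. intros n _.
  assert (sum_f_R0 (fun _ => 0) n = 0) as ->.
  { induction n; simpl; [lra| rewrite IHn; lra]. }
  unfold R_dist. rewrite Rminus_0_r, Rabs_R0. lra.
Qed.

Lemma sum_nonneg s l : (forall n, 0 <= s n) -> infinite_sum s l -> 0 <= l.
Proof.
  intros Hs H. destruct (Rle_lt_dec 0 l) as [|Hl]; auto.
  destruct (H (-l)) as [N HN]; [lra|].
  specialize (HN N (le_n _)). pose proof (cond_pos_sum s N Hs).
  unfold R_dist in HN. rewrite Rabs_right in HN; lra.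
Qed.

Lemma H2_ex w b : in_H2 w b <-> ex_series (fun n => w n * Cnorm2 (b n)).
Proof.
  split; intros [l Hl]; exists l; apply is_series_Reals; auto.
Qed.

Lemma Cnorm2_nonneg z : 0 <= Cnorm2 z.
Proof. unfold Cnorm2. pose proof (pow2_ge_0 (fst z)). pose proof (pow2_ge_0 (snd z)). lra. Qed.

Lemma weight_bound w : weight w -> exists K, 0 < K /\ forall n, w (S n) <= K * w n.
Proof.
  intros [Hp [H0 Hc]].
  assert (HM : forall N, exists K, 0 < K /\ forall n, (n <= N)%nat -> w (S n) / w n <= K).
  { induction N as [|N IH].
    - exists (Rmax 1 (w 1%nat / w 0%nat)). split. apply Rlt_le_trans with 1; [lra| apply Rmax_l].
      intros n Hn. assert (n = 0%nat) by lia. subst. apply Rmax_r.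
    - destruct IH as [K [HK HKn]].
      exists (Rmax K (w (S (S N)) / w (S N))). split.
      apply Rlt_le_trans with K; [lra| apply Rmax_l].
      intros n Hn. destruct (Nat.eq_dec n (S N)). subst. apply Rmax_r.
      apply Rle_trans with K; [apply HKn; lia| apply Rmax_l]. }
  destruct (Hc 1) as [N HN]; [lra|].
  destruct (HM N) as [K [HK HKn]].
  exists (Rmax K 2). split. apply Rlt_le_trans with 2; [lra|apply Rmax_r].
  intros n. assert (w (S n) / w n <= Rmax K 2).
  { destruct (Compare_dec.le_lt_dec n N).
    - apply Rle_trans with K; [auto| apply Rmax_l].
    - specialize (HN n ltac:(lia)). unfold R_dist in HN.
      apply Rabs_def2 in HN. apply Rle_trans with 2; [lra| apply Rmax_r]. }
  specialize (Hp n). apply (Rmult_le_compat_r (w n)) in H; [|lra].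
  unfold Rdiv in H. rewrite Rmult_assoc, Rinv_l, Rmult_1_r in H; lra.
Qed.

Lemma shift1_H2 w b : weight w -> in_H2 w b -> in_H2 w (shift 1 b).
Proof.
  intros Hw Hb. destruct (weight_bound w Hw) as [K [HK HKn]].
  apply H2_ex in Hb. apply H2_ex. apply ex_series_incr_1.
  apply (@ex_series_le _ R_CompleteNormedModule) with (fun n => scal K (w n * Cnorm2 (b n))).
  - intros n. unfold shift. simpl. rewrite Nat.sub_0_r.
    unfold norm; simpl. unfold abs; simpl. unfold scal; simpl; unfold mult; simpl.
    pose proof (Cnorm2_nonneg (b n)). pose proof (HKn n). destruct Hw as [Hp _].
    pose proof (Hp n). pose proof (Hp (S n)).
    rewrite Rabs_right by nra. nra.
  - exact (@ex_series_scal _ R_NormedModule K _ Hb).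
Qed.

Lemma inner_ex w b a : in_H2 w b -> in_H2 w a -> (forall n, 0 < w n) ->
  exists I, inner_is w b a I.
Proof.
  intros Hb Ha Hp. apply H2_ex in Hb, Ha.
  assert (Hs : ex_series (fun n => plus (w n * Cnorm2 (b n)) (w n * Cnorm2 (a n))))
    by exact (@ex_series_plus _ R_NormedModule _ _ Hb Ha).
  assert (ex_series (fun n => w n * fst (Cmul (b n) (Cconj (a n))))) as [l1 H1].
  { apply (@ex_series_le _ R_CompleteNormedModule) with (2 := Hs). intros n.
    unfold norm; simpl. unfold abs, plus; simpl. unfold Cnorm2, Cmul, Cconj; simpl.
    pose proof (Hp n). destruct (b n) as [b1 b2]; destruct (a n) as [a1 a2]; simpl.
    pose proof (Rmult_le_pos _ _ (Rlt_le _ _ H) (Rplus_le_le_0_compat _ _ (Rle_0_sqr (b1-a1)) (Rle_0_sqr (b2-a2)))).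
    pose proof (Rmult_le_pos _ _ (Rlt_le _ _ H) (Rplus_le_le_0_compat _ _ (Rle_0_sqr (b1+a1)) (Rle_0_sqr (b2+a2)))).
    pose proof (Rmult_le_pos _ _ (Rlt_le _ _ H) (Rplus_le_le_0_compat _ _ (Rle_0_sqr (b2-a1)) (Rle_0_sqr (b1+a2)))).
    pose proof (Rmult_le_pos _ _ (Rlt_le _ _ H) (Rplus_le_le_0_compat _ _ (Rle_0_sqr (b2+a1)) (Rle_0_sqr (b1-a2)))).
    unfold Rsqr in *. apply Rabs_le; split; lra. }
  assert (ex_series (fun n => w n * snd (Cmul (b n) (Cconj (a n))))) as [l2 H2].
  { apply (@ex_series_le _ R_CompleteNormedModule) with (2 := Hs). intros n.
    unfold norm; simpl. unfold abs, plus; simpl. unfold Cnorm2, Cmul, Cconj; simpl.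
    pose proof (Hp n). destruct (b n) as [b1 b2]; destruct (a n) as [a1 a2]; simpl.
    pose proof (Rmult_le_pos _ _ (Rlt_le _ _ H) (Rplus_le_le_0_compat _ _ (Rle_0_sqr (b1-a1)) (Rle_0_sqr (b2-a2)))).
    pose proof (Rmult_le_pos _ _ (Rlt_le _ _ H) (Rplus_le_le_0_compat _ _ (Rle_0_sqr (b1+a1)) (Rle_0_sqr (b2+a2)))).
    pose proof (Rmult_le_pos _ _ (Rlt_le _ _ H) (Rplus_le_le_0_compat _ _ (Rle_0_sqr (b2-a1)) (Rle_0_sqr (b1+a2)))).
    pose proof (Rmult_le_pos _ _ (Rlt_le _ _ H) (Rplus_le_le_0_compat _ _ (Rle_0_sqr (b2+a1)) (Rle_0_sqr (b1-a2)))).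
    unfold Rsqr in *. apply Rabs_le; split; lra. }
  exists (l1, l2). split; apply is_series_Reals; auto.
Qed.

Lemma expand w a b c A B I : norm2_is w a A -> norm2_is w b B -> inner_is w b a I ->
  norm2_is w (fun n => Cadd (Cmul c (a n)) (b n))
    (Cnorm2 c * A + B + 2 * (fst c * fst I + snd c * snd I)).
Proof.
  intros HA HB [H1 H2]. unfold norm2_is in *.
  apply (lin4 _ _ _ _ _ _ _ _ _ (2 * fst c) (2 * snd c) (Cnorm2 c) _ H1 H2 HA HB).
  - intros n. unfold Cnorm2, Cadd, Cmul, Cconj; simpl. ring.
  - ring.
Qed.

Ltac cpx := apply injective_projections; simpl; ring.

Lemma shift_S j (a : nat -> Cpx) n : shift 1 (shift j a) n = shift (S j) a n.
Proof.
  unfold shift. destruct (Nat.ltb_spec n 1); destruct (Nat.ltb_spec n (S j)); try lia; auto;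
  destruct (Nat.ltb_spec (n - 1) j); try lia; auto; f_equal; lia.
Qed.

Lemma shift_ext m (P Q : nat -> Cpx) : (forall n, P n = Q n) -> forall n, shift m P n = shift m Q n.
Proof. intros H n. unfold shift. destruct (Nat.ltb n m); auto. Qed.

Lemma shift_C0 m n : shift m (fun _ => C0) n = C0.
Proof. unfold shift. destruct (Nat.ltb n m); auto. Qed.

Lemma rep a j n : polymul (repeat C0 j ++ C1 :: nil) a n = shift j a n.
Proof.
  revert n; induction j; intros n.
  - simpl. rewrite shift_C0. unfold shift. simpl. rewrite Nat.sub_0_r. cpx.
  - simpl. rewrite (shift_ext 1 _ _ IHj), shift_S. cpx.
Qed.

Lemma gkl_eq a k lam : (1 <= k)%nat ->
  polymul (gkl k lam) a = fun n => Cadd (Cmul lam (a n)) (shift k a n).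
Proof.
  intros Hk. destruct k as [|k]; [lia|].
  apply functional_extensionality. intros n. unfold gkl. simpl polymul.
  rewrite Nat.sub_0_r. f_equal. rewrite (shift_ext 1 _ _ (rep a k)), shift_S. reflexivity.
Qed.

Lemma shiftcons m c P (a : nat -> Cpx) n :
  shift m (fun n => Cadd (Cmul c (a n)) (shift 1 P n)) n =
  Cadd (Cmul c (shift m a n)) (shift (S m) P n).
Proof.
  rewrite <- (shift_S m P). unfold shift.
  repeat match goal with |- context [Nat.ltb ?x ?y] => destruct (Nat.ltb_spec x y) end;
  try lia; try cpx.
  replace (n - 1 - m)%nat with (n - m - 1)%nat by lia. reflexivity.
Qed.

Lemma polyinner w a : (forall m, (1 <= m)%nat -> inner_is w (shift m a) a C0) ->
  forall p m, (1 <= m)%nat -> inner_is w (shift m (polymul p a)) a C0.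
Proof.
  intros Hin p. induction p as [|c p IH]; intros m Hm.
  - simpl. split; apply (lin4 _ _ _ _ _ 0 0 0 0 0 0 0 _ sum_zero sum_zero sum_zero sum_zero);
      try (intros n; rewrite shift_C0; simpl; ring); simpl; ring.
  - destruct (Hin m Hm) as [R1 I1]. destruct (IH (S m) ltac:(lia)) as [R2 I2].
    assert (E : forall n, shift m (polymul (c :: p) a) n =
      Cadd (Cmul c (shift m a n)) (shift (S m) (polymul p a) n)) by (intro; apply shiftcons).
    split.
    + apply (lin4 _ _ _ _ _ _ _ _ _ (fst c) (- snd c) 0 _ R1 I1 sum_zero R2).
      * intros n. rewrite E. unfold Cadd, Cmul, Cconj; simpl. ring.
      * simpl; ring.
    + apply (lin4 _ _ _ _ _ _ _ _ _ (fst c) (snd c) 0 _ I1 R1 sum_zero I2).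
      * intros n. rewrite E. unfold Cadd, Cmul, Cconj; simpl. ring.
      * simpl; ring.
Qed.

Lemma onesided I B : (forall x, x * I <= B) -> I = 0.
Proof.
  intros H. destruct (Req_dec I 0) as [|Hn]; auto.
  specialize (H ((B + 1) / I)). unfold Rdiv in H.
  rewrite Rmult_assoc, Rinv_l in H by auto. lra.
Qed.

Lemma conclude w a m N I
  (Hexp : forall lam, norm2_is w (polymul (gkl m lam) a)
     (Cnorm2 lam + N + 2 * (fst lam * fst I + snd lam * snd I))) :
  ((exists C, forall lam, exists l, norm2_is w (polymul (gkl m lam) a) l /\ l <= C + Cnorm2 lam) \/
   (exists D, forall lam, exists l, norm2_is w (polymul (gkl m lam) a) l /\ l >= D + Cnorm2 lam)) ->
  I = C0.
Proof.
  destruct I as [I1 I2]. intros [[C HC]|[D HD]].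
  - assert (2 * I1 = 0).
    { apply (onesided _ (C - N)). intros x. destruct (HC (x, 0)) as [l [Hl Hle]].
      rewrite (uniqueness_sum _ _ _ Hl (Hexp (x, 0))) in Hle. simpl in Hle. lra. }
    assert (2 * I2 = 0).
    { apply (onesided _ (C - N)). intros x. destruct (HC (0, x)) as [l [Hl Hle]].
      rewrite (uniqueness_sum _ _ _ Hl (Hexp (0, x))) in Hle. simpl in Hle. lra. }
    unfold C0. f_equal; lra.
  - assert (2 * I1 = 0).
    { apply (onesided _ (N - D)). intros x. destruct (HD (-x, 0)) as [l [Hl Hle]].
      rewrite (uniqueness_sum _ _ _ Hl (Hexp (-x, 0))) in Hle. simpl in Hle. lra. }
    assert (2 * I2 = 0).
    { apply (onesided _ (N - D)). intros x. destruct (HD (0, -x)) as [l [Hl Hle]].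
      rewrite (uniqueness_sum _ _ _ Hl (Hexp (0, -x))) in Hle. simpl in Hle. lra. }
    unfold C0. f_equal; lra.
Qed.

Lemma shiftk_H2 w a : weight w -> in_H2 w a -> forall k, in_H2 w (shift k a).
Proof.
  intros hw ha k. induction k.
  - replace (shift 0 a) with a; auto. apply functional_extensionality; intro n.
    unfold shift. simpl. rewrite Nat.sub_0_r. reflexivity.
  - replace (shift (S k) a) with (shift 1 (shift k a)).
    + apply shift1_H2; auto.
    + apply functional_extensionality; intro n. apply shift_S.
Qed.

Lemma key w a k : weight w -> norm2_is w a 1 -> (1 <= k)%nat ->
  exists N I, norm2_is w (shift k a) N /\ inner_is w (shift k a) a I /\
  forall lam, norm2_is w (polymul (gkl k lam) a)
     (Cnorm2 lam + N + 2 * (fst lam * fst I + snd lam * snd I)).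
Proof.
  intros hw ha hk. assert (Ha : in_H2 w a) by (exists 1; auto).
  destruct (shiftk_H2 w a hw Ha k) as [N HN].
  destruct (inner_ex w (shift k a) a (ex_intro _ N HN) Ha (proj1 hw)) as [I HI].
  exists N, I. split; [auto|split; [auto|]].
  intros lam. rewrite gkl_eq by auto.
  pose proof (expand w a (shift k a) lam 1 N I ha HN HI) as E.
  rewrite Rmult_1_r in E. exact E.
Qed.

Lemma norm2_nonneg w b l : weight w -> norm2_is w b l -> 0 <= l.
Proof.
  intros [Hp _] H. apply (sum_nonneg _ _ ) in H; auto.
  intros n. apply Rmult_le_pos; [apply Rlt_le, Hp| apply Cnorm2_nonneg].
Qed.

Lemma inner_unique w b a I J : inner_is w b a I -> inner_is w b a J -> I = J.
Proof.
  destruct I, J. intros [H1 H2] [H3 H4]. simpl in *.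
  rewrite (uniqueness_sum _ _ _ H1 H3), (uniqueness_sum _ _ _ H2 H4). reflexivity.
Qed.

Lemma polynorm w a : weight w -> norm2_is w a 1 ->
  (forall m, (1 <= m)%nat -> inner_is w (shift m a) a C0) ->
  forall p, exists L, norm2_is w (polymul p a) L /\ Cnorm2 (peval0 p) <= L.
Proof.
  intros hw ha hin p. destruct p as [|c p].
  - exists 0. split.
    + apply (lin4 _ _ _ _ _ 0 0 0 0 0 0 0 _ sum_zero sum_zero sum_zero sum_zero).
      * intros n. unfold Cnorm2; simpl. ring.
      * ring.
    + apply Req_le. unfold Cnorm2; simpl. ring.
  - assert (HP : in_H2 w (polymul p a)).
    { clear c. induction p as [|c p IH].
      - exists 0. apply (lin4 _ _ _ _ _ 0 0 0 0 0 0 0 _ sum_zero sum_zero sum_zero sum_zero).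
        * intros n. unfold Cnorm2; simpl. ring.
        * ring.
      - destruct (shift1_H2 w _ hw IH) as [B HB].
        pose proof (expand w a _ c 1 B C0 ha HB (polyinner w a hin p 1 (le_n _))) as E.
        eexists. exact E. }
    destruct (shift1_H2 w _ hw HP) as [B HB].
    pose proof (expand w a _ c 1 B C0 ha HB (polyinner w a hin p 1 (le_n _))) as E.
    eexists. split. exact E. simpl.
    pose proof (norm2_nonneg w _ _ hw HB). lra.
Qed.

Theorem mainTheorem2 (w : nat -> R) (a : nat -> Cpx)
  (hw : weight w) (ha : in_H2 w a) :
  (is_inner w a <->
   (norm2_is w a 1 /\
    forall k : nat, (1 <= k)%nat ->
      (exists Ck : R, forall lam : Cpx,
         exists l, norm2_is w (polymul (gkl k lam) a) l /\ l <= Ck + Cnorm2 lam)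
      \/
      (exists Dk : R, forall lam : Cpx,
         exists l, norm2_is w (polymul (gkl k lam) a) l /\ l >= Dk + Cnorm2 lam)))
  /\
  (is_inner w a <->
   (norm2_is w a 1 /\
    forall p : cpoly,
      exists l, norm2_is w (polymul p a) l /\ Cmod (peval0 p) <= sqrt l)).
Proof.
  split; split.
  - intros [h1 hin]. split; auto. intros k hk. left.
    destruct (key w a k hw h1 hk) as [N [I [HN [HI HE]]]].
    rewrite (inner_unique _ _ _ _ _ HI (hin k hk)) in HE.
    exists N. intros lam. eexists. split. apply HE. simpl. lra.
  - intros [h1 hk]. split; auto. intros m hm.
    destruct (key w a m hw h1 hm) as [N [I [HN [HI HE]]]].
    rewrite <- (conclude w a m N I HE (hk m hm)). exact HI.
  - intros [h1 hin]. split; auto. intros p.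
    destruct (polynorm w a hw h1 hin p) as [L [HL HLe]].
    exists L. split; auto. unfold Cmod. apply sqrt_le_1_alt. exact HLe.
  - intros [h1 hp]. split; auto. intros m hm.
    destruct (key w a m hw h1 hm) as [N [I [HN [HI HE]]]].
    rewrite <- (conclude w a m N I HE). exact HI.
    right. exists 0. intros lam. destruct (hp (gkl m lam)) as [l [Hl Hle]].
    exists l. split; auto. simpl in Hle. unfold Cmod in Hle.
    pose proof (norm2_nonneg w _ _ hw Hl).
    apply sqrt_le_0 in Hle; [lra | apply Cnorm2_nonneg | auto].
Qed.
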